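(* Let $X$ be a compact metric space. Then $X$ is antipodal if and only if $\mathbf{E}(X)$ is convex as a subset of $C(X)$, the space of continuous real-valued functions on $X$.
   Context: A metric space $X$ is antipodal if for every $x\in X$ there exists $\bar x\in X$ with $d_X(x,\bar x)=d_X(x,y)+d_X(y,\bar x)$ for all $y\in X$. $\Delta(X)=\{f:X\to\mathbb{R}\text{ bounded}:f(x)+f(x')\ge d_X(x,x')\}$ and the tight span $\mathbf{E}(X)$ is the set of pointwise-minimal elements of $\Delta(X)$ (these are 1-Lipschitz, hence in $C(X)$). *)

(* Defs.v *)
From Stdlib Require Import Reals List.
Open Scope R_scope.

Definition is_metric {X : Type} (d : X -> X -> R) : Prop :=
  (forall x y, 0 <= d x y) /\
  (forall x y, d x y = 0 <-> x = y) /\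
  (forall x y, d x y = d y x) /\
  (forall x y z, d x z <= d x y + d y z).

Definition metric_open {X : Type} (d : X -> X -> R) (U : X -> Prop) : Prop :=
  forall x, U x -> exists e, 0 < e /\ forall y, d x y < e -> U y.

Definition metric_compact {X : Type} (d : X -> X -> R) : Prop :=
  forall (I : Type) (U : I -> X -> Prop),
    (forall i, metric_open d (U i)) ->
    (forall x, exists i, U i x) ->
    exists l : list I, forall x, exists i, In i l /\ U i x.

Definition antipodal {X : Type} (d : X -> X -> R) : Prop :=
  forall x, exists xbar, forall y, d x xbar = d x y + d y xbar.

Definition in_Delta {X : Type} (d : X -> X -> R) (f : X -> R) : Prop :=
  (exists M, forall x, Rabs (f x) <= M) /\
  (forall x x', f x + f x' >= d x x').

(* Tight span E(X): pointwise-minimal elements of Delta(X). *)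
Definition in_tight_span {X : Type} (d : X -> X -> R) (f : X -> R) : Prop :=
  in_Delta d f /\
  (forall g, in_Delta d g -> (forall x, g x <= f x) -> forall x, g x = f x).

Definition convex_fun_set {X : Type} (S : (X -> R) -> Prop) : Prop :=
  forall f g (t : R), S f -> S g -> 0 <= t <= 1 ->
    S (fun x => t * f x + (1 - t) * g x).

(* Main.v *)
Require Import Defs.
From Stdlib Require Import Reals Lra List Classical ClassicalEpsilon.
Open Scope R_scope.

Lemma met_dxx {X} (d : X -> X -> R) (Hd : is_metric d) x : d x x = 0.
Proof. destruct Hd as [_ [H _]]. apply H; reflexivity. Qed.

Lemma delta_nonneg {X} (d : X -> X -> R) (Hd : is_metric d) f :
  in_Delta d f -> forall x, 0 <= f x.
Proof.
  intros [_ H] x. specialize (H x x). rewrite (met_dxx d Hd) in H. lra.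
Qed.

Lemma tight_le {X} (d : X -> X -> R) (Hd : is_metric d) f
  (Hf : in_tight_span d f) z c :
  0 <= c -> (forall y, y <> z -> c + f y >= d z y) -> f z <= c.
Proof.
  intros Hc Hy.
  destruct (Rle_dec (f z) c) as [|Hn]; auto. exfalso.
  destruct Hf as [[[M HM] HD] Hmin].
  set (g := fun y => if excluded_middle_informative (y = z) then c else f y).
  assert (Hg : in_Delta d g).
  { split.
    - exists (Rmax M c). intro x. unfold g.
      destruct (excluded_middle_informative (x = z)).
      + rewrite Rabs_pos_eq; auto. apply Rmax_r.
      + eapply Rle_trans; [apply HM| apply Rmax_l].
    - intros x x'. unfold g.
      destruct (excluded_middle_informative (x = z));
      destruct (excluded_middle_informative (x' = z)); subst.
      + rewrite (met_dxx d Hd). lra.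
      + apply Hy; auto.
      + destruct Hd as [_ [_ [Hs _]]]. rewrite Hs.
        specialize (Hy x n). lra.
      + apply HD. }
  assert (Hle : forall x, g x <= f x).
  { intro x. unfold g. destruct (excluded_middle_informative (x = z)).
    - subst. lra.
    - lra. }
  specialize (Hmin g Hg Hle z). unfold g in Hmin.
  destruct (excluded_middle_informative (z = z)) as [_|C]; [lra|now apply C].
Qed.

Lemma tight_lip {X} (d : X -> X -> R) (Hd : is_metric d) f
  (Hf : in_tight_span d f) a b : f a <= f b + d a b.
Proof.
  assert (Hnn := delta_nonneg d Hd f (proj1 Hf)).
  pose proof Hd as [Hp [He [Hs Ht]]].
  apply (tight_le d Hd f Hf a). { specialize (Hnn b). specialize (Hp a b). lra. }
  intros y _. pose proof (proj2 (proj1 Hf) b y) as HD.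
  specialize (Ht a b y). lra.
Qed.

Lemma tight_antipode {X} (d : X -> X -> R) (Hd : is_metric d) f
  (Hf : in_tight_span d f) x xb :
  (forall y, d x xb = d x y + d y xb) -> f x + f xb = d x xb.
Proof.
  intros A.
  assert (Hnn := delta_nonneg d Hd f (proj1 Hf)).
  pose proof Hd as [Hp [He [Hs Ht]]].
  assert (B : f xb <= d x xb).
  { apply (tight_le d Hd f Hf xb (d x xb)); [apply Hp|].
    intros y _. rewrite (A y). rewrite (Hs xb y). specialize (Hnn y).
    specialize (Hp x y). lra. }
  assert (C : f x <= d x xb - f xb).
  { apply (tight_le d Hd f Hf x (d x xb - f xb)); [lra|].
    intros y _. rewrite (A y). pose proof (tight_lip d Hd f Hf xb y) as HL. rewrite (Hs xb y) in HL. lra. }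
  pose proof (proj2 (proj1 Hf) x xb) as HD. lra.
Qed.

Lemma tight_approx {X} (d : X -> X -> R) (Hd : is_metric d) h
  (Hh : in_tight_span d h) u eps : 0 < eps ->
  exists w, h u + h w <= d u w + eps.
Proof.
  intros Heps. apply NNPP. intro Hn.
  assert (H : forall w, h u + h w > d u w + eps).
  { intro w. apply Rnot_le_gt. intro H. apply Hn. exists w. exact H. }
  assert (Hc : 0 <= h u - eps / 2).
  { specialize (H u). rewrite (met_dxx d Hd) in H. lra. }
  assert (L := tight_le d Hd h Hh u (h u - eps/2) Hc).
  assert (h u <= h u - eps / 2).
  { apply L. intros y _. specialize (H y). lra. }
  lra.
Qed.

Lemma list_max {X} (d : X -> X -> R) a (l : list X) :
  exists w1, forall i, In i l -> d a i <= d a w1.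
Proof.
  induction l as [|b l IH].
  - exists a. intros i [].
  - destruct IH as [w1 Hw1].
    destruct (Rle_dec (d a b) (d a w1)).
    + exists w1. intros i [<-|Hi]; auto.
    + exists b. intros i [<-|Hi]; [lra|]. specialize (Hw1 i Hi). lra.
Qed.

Lemma max_exists {X} (d : X -> X -> R) (Hd : is_metric d)
  (Hc : metric_compact d) a : exists w0, forall v, d a v <= d a w0.
Proof.
  apply NNPP. intro Hn.
  assert (H : forall w, exists v, d a w < d a v).
  { intro w. apply NNPP. intro H1. apply Hn. exists w. intro v.
    apply Rnot_lt_le. intro H2. apply H1. exists v. exact H2. }
  destruct Hd as [Hp [He [Hs Ht]]].
  destruct (Hc X (fun w v => d a v < d a w)) as [l Hl].
  - intros w v Hv. exists (d a w - d a v). split; [lra|].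
    intros y Hy. specialize (Ht a v y). lra.
  - intro v. destruct (H v) as [v' Hv']. exists v'. exact Hv'.
  - destruct (list_max d a l) as [w1 Hw1].
    destruct (Hl w1) as [i [Hi Hi']]. specialize (Hw1 i Hi). lra.
Qed.

Lemma dist_tight {X} (d : X -> X -> R) (Hd : is_metric d)
  (Hc : metric_compact d) a : in_tight_span d (d a).
Proof.
  destruct (max_exists d Hd Hc a) as [w0 Hw0].
  pose proof Hd as [Hp [He [Hs Ht]]].
  split.
  - split.
    + exists (d a w0). intro x. rewrite Rabs_pos_eq; auto.
    + intros x x'. specialize (Ht x a x'). rewrite (Hs x a) in Ht. lra.
  - intros g [_ Hg] Hle x.
    assert (Hgx : g a = 0).
    { specialize (Hle a). specialize (Hg a a).
      rewrite (met_dxx d Hd) in Hle, Hg. lra. }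
    specialize (Hg a x). specialize (Hle x). lra.
Qed.

Lemma le_eps (a b : R) : (forall eps, 0 < eps -> a <= b + eps) -> a <= b.
Proof.
  intro H. destruct (Rle_dec a b); auto.
  specialize (H ((a - b)/2)). lra.
Qed.

Theorem proposition2p26 (X : Type) (d : X -> X -> R)
  (Hd : is_metric d) (Hc : metric_compact d) :
  antipodal d <-> convex_fun_set (in_tight_span d).
Proof.
  split.
  - intros A f g t Hf Hg Ht.
    pose proof Hf as [[[M1 HM1] HD1] Hm1].
    pose proof Hg as [[[M2 HM2] HD2] Hm2].
    assert (HDh : in_Delta d (fun x => t * f x + (1 - t) * g x)).
    { split.
      - exists (M1 + M2). intro x.
        eapply Rle_trans; [apply Rabs_triang|].
        rewrite !Rabs_mult. rewrite (Rabs_pos_eq t) by lra.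
        rewrite (Rabs_pos_eq (1 - t)) by lra.
        specialize (HM1 x). specialize (HM2 x).
        assert (0 <= Rabs (f x)) by apply Rabs_pos.
        assert (0 <= Rabs (g x)) by apply Rabs_pos.
        nra.
      - intros x x'. specialize (HD1 x x'). specialize (HD2 x x'). nra. }
    split; auto.
    intros k Hk Hle x.
    destruct (A x) as [xb Hxb].
    assert (E1 := tight_antipode d Hd f Hf x xb Hxb).
    assert (E2 := tight_antipode d Hd g Hg x xb Hxb).
    destruct Hk as [_ Hk].
    specialize (Hk x xb). assert (H1 := Hle x). assert (H2 := Hle xb).
    simpl in *. nra.
  - intros C x.
    destruct (max_exists d Hd Hc x) as [w0 Hw0].
    exists w0. intro y.
    set (h := fun u => / 2 * d w0 u + (1 - / 2) * d y u).
    assert (Hh : in_tight_span d h).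
    { apply C; try apply dist_tight; auto. lra. }
    pose proof Hd as [Hp [He [Hs Ht]]].
    apply Rle_antisym; [apply Ht|].
    rewrite <- (Rplus_0_r (d x w0)).
    apply le_eps. intros eps Heps.
    destruct (tight_approx d Hd h Hh x (eps/4) ltac:(lra)) as [w Hw].
    unfold h in Hw.
    assert (T1 := Ht x y w). assert (T2 := Ht x w0 w).
    assert (T3 := Ht y w w0). assert (M := Hw0 w).
    assert (S1 := Hs w0 x). assert (S2 := Hs y x). assert (S3 := Hs w0 w).
    assert (S4 := Hs y w). assert (T4 := Ht w0 x w).
    assert (T5 := Ht x y w0).
    lra.
Qed.
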